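(* Let $d\ge2$. If $p<1-p_c^{\operatorname{bond}}(d)$, then \[ P_p\bigl(K(\omega)\text{ encloses }\tilde B(n)\bigr)\longrightarrow 0\quad\text{as }n\to\infty. \]
   Context: A face is a $(d-1)$-dimensional elementary cube in $\mathbb{R}^d$ (a product of intervals $[l,l]$ or $[l,l+1]$, $l\in\mathbb{Z}$, with exactly one degenerate factor). In face percolation with parameter $p$ each face is open independently with probability $p$ (measure $P_p$); $K(\omega)$ is the union of open faces. $(\mathbb{Z}^d)^*=\mathbb{Z}^d+(1/2,\dots,1/2)$ and $\tilde B(n)=\{x^*\in(\mathbb{Z}^d)^*:\|x^*\|_\infty<n\}$. A union $X$ of faces encloses $V\subset(\mathbb{Z}^d)^*$ if there are finitely many faces $Q_1,\dots,Q_k$ of $X$ such that $V$ is contained in a bounded connected component of $\mathbb{R}^d\setminus\bigcup_{i=1}^kQ_i$. $p_c^{\operatorname{bond}}(d)$ is the critical probability of Bernoulli bond percolation on $\mathbb{Z}^d$. *)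

(* Defs.v *)
From HB Require Import structures.
From Stdlib Require Import Relations.
From mathcomp Require Import all_boot all_order all_algebra.
From mathcomp Require Import all_classical all_reals all_analysis.

Set Implicit Arguments.
Unset Strict Implicit.
Unset Printing Implicit Defensive.

Import Order.TTheory GRing.Theory Num.Theory.
Import numFieldNormedType.Exports.
Local Open Scope classical_set_scope.
Local Open Scope ring_scope.

Definition site (d : nat) := {ffun 'I_d -> int}.

Definition iid_bernoulli (R : realType) (dT : measure_display)
  (T : measurableType dT) (I : eqType) (P : probability T R)
  (X : I -> T -> bool) (p : R) : Prop :=
  (forall i, measurable [set t | X i t]) /\
  forall (s : seq I) (b : I -> bool), uniq s ->
    P (\bigcap_(i in [set` s]) [set t | X i t = b i]) =
    (\prod_(i <- s) (if b i then p else 1 - p))%:E.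

(* Faces: (l, i) stands for the elementary cube
   prod_j I_j with I_i = [l_i, l_i] and I_j = [l_j, l_j + 1] for j <> i. *)
Definition face (d : nat) := (site d * 'I_d)%type.

Definition face_set (R : realType) (d : nat) (Q : face d) : set 'rV[R]_d :=
  [set x | forall j : 'I_d,
     if j == Q.2 then x ord0 j = (Q.1 j)%:~R
     else ((Q.1 j)%:~R <= x ord0 j <= (Q.1 j)%:~R + 1)].

Definition bounded_Rd (R : realType) (d : nat) (C : set 'rV[R]_d) : Prop :=
  exists M : R, forall x, C x -> forall j, `|x ord0 j| <= M.

Definition encloses (R : realType) (d : nat) (X : face d -> Prop)
  (V : set 'rV[R]_d) : Prop :=
  exists Qs : seq (face d), (forall Q, Q \in Qs -> X Q) /\
    exists x : 'rV[R]_d,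
      let A := ~` (\bigcup_(Q in [set` Qs]) @face_set R d Q) in
      [/\ A x, bounded_Rd (connected_component A x)
        & V `<=` connected_component A x].

Definition dual_box (R : realType) (d : nat) (n : nat) : set 'rV[R]_d :=
  [set x | (exists z : site d, forall j, x ord0 j = (z j)%:~R + 2^-1) /\
           forall j, `|x ord0 j| < n%:R].

(* Bond percolation on Z^d: the edge (z, i) joins z and z + e_i. *)
Definition edge (d : nat) := (site d * 'I_d)%type.

Definition shift (d : nat) (z : site d) (i : 'I_d) : site d :=
  [ffun j => z j + (j == i)%:Z].

Definition origin (d : nat) : site d := [ffun => 0].

Definition open_adj (d : nat) (omega : edge d -> bool) (x y : site d) : Prop :=
  exists e : edge d, omega e /\
    ((e.1 = x /\ y = shift e.1 e.2) \/ (e.1 = y /\ x = shift e.1 e.2)).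

Definition origin_percolates (d : nat) (omega : edge d -> bool) : Prop :=
  ~ finite_set [set y | clos_refl_trans (site d) (open_adj omega) (origin d) y].

Definition bond_theta_zero (R : realType) (d : nat) (q : R) : Prop :=
  forall (dT : measure_display) (T : measurableType dT) (P : probability T R)
    (omega : edge d -> T -> bool),
    @iid_bernoulli R dT T (edge d) P omega q ->
    P [set t | origin_percolates (fun e => omega e t)] = 0%E.

Definition pc_bond (R : realType) (d : nat) : R :=
  sup [set q : R | 0 <= q <= 1 /\ @bond_theta_zero R d q].

(* Main.v *)
Require Import Defs.
From HB Require Import structures.
From Stdlib Require Import Relations.
From mathcomp Require Import all_boot all_order all_algebra.
From mathcomp Require Import all_classical all_reals all_analysis.
From mathcomp Require Import ring lra.
Import Order.TTheory GRing.Theory Num.Theory.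
Import numFieldNormedType.Exports.
Local Open Scope classical_set_scope.
Local Open Scope ring_scope.
Set Implicit Arguments.
Unset Strict Implicit.
Unset Printing Implicit Defensive.
Lemma set_consE (I : eqType) (i : I) (s : seq I) : [set` (i :: s)] = i |` [set` s].
Proof.
apply/seteqP; split => x /=; rewrite inE.
  by case/orP => [/eqP->|]; [left|right].
by case => [->|->]; rewrite ?eqxx ?orbT.
Qed.

Section Cyl.
Context (R : realType) (dT : measure_display) (T : measurableType dT)
  (P : probability T R) (I : eqType) (X : I -> T -> bool) (p : R).
Hypothesis HX : iid_bernoulli P X p.

Definition w (b : bool) : R := if b then p else 1 - p.
Definition upd (s : seq I) (g c : I -> bool) : I -> bool :=
  fun i => if i \in s then g i else c i.
Definition setb (c : I -> bool) (i : I) (b : bool) : I -> bool :=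
  fun j => if j == i then b else c j.
Fixpoint ev (s : seq I) (F : (I -> bool) -> Prop) (c : I -> bool) : R :=
  match s with
  | [::] => if `[< F c >] then 1 else 0
  | i :: s' => p * ev s' F (setb c i true) + (1 - p) * ev s' F (setb c i false)
  end.
Definition atom (s0 : seq I) (b : I -> bool) : set T :=
  \bigcap_(i in [set` s0]) [set t | X i t = b i].
Definition evt' (s : seq I) (F : (I -> bool) -> Prop) (c : I -> bool) : set T :=
  [set t | F (upd s (fun i => X i t) c)].

Lemma setbE (c : I -> bool) i x : setb c i x i = x.
Proof. by rewrite /setb eqxx. Qed.

Lemma mX1 i (b : bool) : measurable [set t | X i t = b].
Proof.
case: b; first exact: HX.1.
rewrite (_ : [set t | X i t = false] = ~` [set t | X i t]); first exact/measurableC/HX.1.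
by apply/seteqP; split => t /=; case: (X i t).
Qed.

Lemma matom s0 b : measurable (atom s0 b).
Proof. by apply: fin_bigcap_measurable => // i _; exact: mX1. Qed.

Lemma atom_cons i s0 b : atom (i :: s0) b = [set t | X i t = b i] `&` atom s0 b.
Proof. by rewrite /atom set_consE bigcap_setU1. Qed.

Lemma atom_setb i s0 b x : i \notin s0 -> atom s0 (setb b i x) = atom s0 b.
Proof.
move=> Hi; apply/seteqP; split => t H j /= js0; have := H j js0; rewrite /setb /=;
  case: eqP => // eji; by move: Hi; rewrite -eji js0.
Qed.

Lemma upd_cons i s g c : upd (i :: s) g c = upd s g (setb c i (g i)).
Proof.
apply: funext => j; rewrite /upd /setb inE; case: eqP => [->|_] /=.
  by case: (i \in s).
by [].
Qed.

Lemma prod_setb i s0 b x : i \notin s0 ->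
  \prod_(j <- i :: s0) w (setb b i x j) = w x * \prod_(j <- s0) w (b j).
Proof.
move=> Hi; rewrite big_cons /setb eqxx; congr (_ * _).
apply: eq_big_seq => j js0; case: eqP => // eji; by move: Hi; rewrite -eji js0.
Qed.

Lemma Lgen (E : set T) (kappa : R) (s' : seq I) :
  measurable E ->
  (forall s0 b, uniq s0 -> all (fun i => i \notin s') s0 ->
     P (atom s0 b `&` E) = ((\prod_(i <- s0) w (b i)) * kappa)%:E) ->
  forall F s s0 b c, uniq (s0 ++ s) -> all (fun i => i \notin s') (s0 ++ s) ->
   measurable (evt' s F c) /\
   P (atom s0 b `&` evt' s F c `&` E) = ((\prod_(i <- s0) w (b i)) * ev s F c * kappa)%:E.
Proof.
move=> mE hE F s; elim: s => [|i s IH] s0 b c.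
  rewrite cats0 => us0 as0 /=.
  have -> : evt' [::] F c = if `[< F c >] then setT else set0.
    apply/seteqP; split => t /=; rewrite /evt' /upd /=; case: asboolP => //.
  case: asboolP => _; split => //.
  - by rewrite setIT hE // mulr1.
  - by rewrite setI0 set0I measure0 mulr0 mul0r.
move=> us as0.
have Hi : i \notin s0.
  by move: us; rewrite cat_uniq => /and3P[_ + _] /=; rewrite negb_or => /andP[].
have us1 : uniq ((i :: s0) ++ s).
  have := perm_catCA [:: i] s0 s => /permPl H.
  by rewrite (perm_uniq H).
have as1 : all (fun i => i \notin s') ((i :: s0) ++ s).
  move: as0; rewrite !all_cat /=; case/andP => -> /andP [-> ->] //.
have mXi (x : bool) : measurable [set t | X i t = x] by exact: mX1.
have [m1 e1] := IH (i :: s0) (setb b i true) (setb c i true) us1 as1.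
have [m0 e0] := IH (i :: s0) (setb b i false) (setb c i false) us1 as1.
have evE : evt' (i :: s) F c = ([set t | X i t = true] `&` evt' s F (setb c i true)) `|`
   ([set t | X i t = false] `&` evt' s F (setb c i false)).
  apply/seteqP; split => t; rewrite /evt' /= upd_cons; case: (X i t) => /=;
    by [left|right|case=> -[]].
split.
  by rewrite evE; apply: measurableU; apply: measurableI.
move: e1 e0; rewrite !atom_cons !atom_setb // !setbE => e1 e0.
rewrite evE.
have -> : atom s0 b `&` (([set t | X i t = true] `&` evt' s F (setb c i true)) `|`
   ([set t | X i t = false] `&` evt' s F (setb c i false))) `&` E =
   ([set t | X i t = true] `&` atom s0 b `&` evt' s F (setb c i true) `&` E) `|`
   ([set t | X i t = false] `&` atom s0 b `&` evt' s F (setb c i false) `&` E).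
  apply/seteqP; split => t /=; tauto.
rewrite measureU.
- idtac.
  rewrite [RHS](_ : _ = (\prod_(i0 <- i :: s0) w (setb b i true i0) * ev s F (setb c i true) * kappa)%:E + (\prod_(i0 <- i :: s0) w (setb b i false i0) * ev s F (setb c i false) * kappa)%:E).
    by congr (_ + _); [exact: e1 | exact: e0].
  rewrite -EFinD /=; congr EFin.
  rewrite !big_cons /setb !eqxx /w.
  have -> : \prod_(j <- s0) (if (if j == i then true else b j) then p else 1 - p) = \prod_(j <- s0) (if b j then p else 1 - p).
    apply: eq_big_seq => j js0; case: eqP => // eji; by move: Hi; rewrite -eji js0.
  have -> : \prod_(j <- s0) (if (if j == i then false else b j) then p else 1 - p) = \prod_(j <- s0) (if b j then p else 1 - p).
    apply: eq_big_seq => j js0; case: eqP => // eji; by move: Hi; rewrite -eji js0.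
  ring.
- by apply: measurableI => //; apply: measurableI => //; apply: measurableI => //; exact: matom.
- by apply: measurableI => //; apply: measurableI => //; apply: measurableI => //; exact: matom.
- by apply/seteqP; split => t //= [[[[]]]] + _ _ _ [[[]]] => ->.
Qed.

Definition depends (s : seq I) (F : (I -> bool) -> Prop) :=
  forall g c, F (upd s g c) <-> F g.
Definition evt (F : (I -> bool) -> Prop) : set T := [set t | F (fun i => X i t)].

Lemma evt_dep s F c : depends s F -> evt' s F c = evt F.
Proof. by move=> H; apply/seteqP; split => t /=; rewrite /evt' /= H. Qed.

Lemma atom_nil b : atom [::] b = setT.
Proof. by rewrite /atom set_nil bigcap_set0. Qed.

Lemma Lbase F s s0 b c : uniq (s0 ++ s) ->
  measurable (evt' s F c) /\
  P (atom s0 b `&` evt' s F c) = ((\prod_(i <- s0) w (b i)) * ev s F c)%:E.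
Proof.
move=> us.
have := @Lgen setT 1 [::] measurableT _ F s s0 b c us.
rewrite setIT mulr1; apply => //.
  by move=> s1 b1 u1 _; rewrite setIT mulr1; exact: HX.2.
by apply/allP => x.
Qed.

Lemma L1 s F c : uniq s -> depends s F ->
  measurable (evt F) /\ P (evt F) = (ev s F c)%:E.
Proof.
move=> us dF; have [m e] := @Lbase F s [::] (fun _ => true) c us.
by rewrite -(evt_dep c dF); split => //; move: e; rewrite atom_nil setTI big_nil mul1r.
Qed.

Lemma indep s s' FA FC : uniq (s ++ s') -> depends s FA -> depends s' FC ->
  P (evt FA `&` evt FC) = (P (evt FA) * P (evt FC))%E.
Proof.
move=> us dA dC.
have us' : uniq s' by move: us; rewrite cat_uniq => /and3P[].
have uss : uniq s by move: us; rewrite cat_uniq => /and3P[].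
have [mA eA] := L1 (fun _ => true) uss dA.
have [mC eC] := L1 (fun _ => true) us' dC.
have H := @Lgen (evt FC) (ev s' FC (fun _ => true)) s' mC _ FA s [::] (fun _ => true) (fun _ => true).
rewrite eA eC -EFinM; rewrite atom_nil setTI big_nil mul1r (evt_dep _ dA) in H.
apply: (H _ uss _).2.
  move=> s0 b u0 a0.
  have u0' : uniq (s0 ++ s').
    rewrite cat_uniq u0 us' andbT -all_predC.
    apply/allP => x xs' /=; apply/negP => xs0.
    by move: a0 => /allP /(_ x xs0); rewrite xs'.
  have [_ e] := @Lbase FC s' s0 b (fun _ => true) u0'.
  by rewrite -(evt_dep (fun _ => true) dC).
apply/allP => x xs; apply/negP => xs'.
by move: us; rewrite cat_uniq => /and3P[_ /hasPn /(_ x xs') /=]; rewrite xs.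
Qed.
End Cyl.
From mathcomp Require Import zify.
Section Perc.
Variable d : nat.
Local Notation site := (site d).
Local Notation edge := (edge d).

Definition nrm (z : site) : nat := \max_(j < d) absz (z j).

Lemma nrm_ge (z : site) j : (absz (z j) <= nrm z)%N.
Proof. exact: (@leq_bigmax _ (fun k : 'I_d => absz (z k)) j). Qed.

Lemma nrm_le (z : site) K : (forall j, absz (z j) <= K)%N -> (nrm z <= K)%N.
Proof. by move=> H; apply/bigmax_leqP => j _; exact: H. Qed.

Lemma nrm_shift1 (z : site) (i : 'I_d) : (nrm (Defs.shift z i) <= (nrm z).+1)%N.
Proof.
apply: nrm_le => j; have := nrm_ge z j; rewrite /shift ffunE.
by case: (j == i) => /=; lia.
Qed.

Lemma nrm_shift2 (z : site) (i : 'I_d) : (nrm z <= (nrm (Defs.shift z i)).+1)%N.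
Proof.
apply: nrm_le => j; have := nrm_ge (Defs.shift z i) j; rewrite /shift ffunE.
by case: (j == i) => /=; lia.
Qed.

Definition conn (g : edge -> bool) := clos_refl_trans site (open_adj g).
Definition perc (g : edge -> bool) x := ~ finite_set [set y | conn g x y].
Definition restr K (g : edge -> bool) : edge -> bool := fun e => g e && (nrm e.1 <= K)%N.
Definition Gk K g x := exists y, (K <= nrm y)%N /\ conn (restr K g) x y.
Definition Gall K g x := forall k, (k <= K)%N -> Gk k g x.

Lemma conn_trans g x y z : conn g x y -> conn g y z -> conn g x z.
Proof. exact: rt_trans. Qed.
Lemma conn_refl g x : conn g x x.
Proof. exact: rt_refl. Qed.
Lemma conn_step g x y : open_adj g x y -> conn g x y.
Proof. exact: rt_step. Qed.

Lemma conn_mono (g g' : edge -> bool) x y : (forall e, g e -> g' e) ->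
  conn g x y -> conn g' x y.
Proof.
move=> H; elim => [a b [e [ge he]]|a|a b c _ IH1 _ IH2].
- by apply: rt_step; exists e; split => //; exact: H.
- exact: rt_refl.
- exact: rt_trans IH1 IH2.
Qed.

Lemma boxset_finite K : finite_set [set z : site | (nrm z <= K)%N].
Proof.
pose f (k : {ffun 'I_d -> 'I_(K.*2.+1)}) : site := [ffun j => (k j : nat)%:Z - K%:Z].
apply: (@sub_finite_set _ _ (f @` setT)); last exact: finite_image.
move=> z /= Hz; exists [ffun j => inord (absz (z j + K%:Z))] => //.
apply/ffunP => j; have Hj := leq_trans (nrm_ge z j) Hz; rewrite !ffunE inordK.
  by clear f; move: (z j) Hj => y; lia.
by clear f; move: (z j) Hj => y; lia.
Qed.

Lemma finite_bound (A : set site) : finite_set A -> exists K, forall y, A y -> (nrm y < K)%N.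
Proof.
move=> /finite_seqP [s ->]; exists (\max_(y <- s) nrm y).+1 => y /= ys.
by rewrite ltnS; apply: leq_bigmax_seq.
Qed.

Lemma perc_Gk (g : edge -> bool) (x : site) K : perc g x -> Gk K g x.
Proof.
move=> Hp.
have [y [Hy1 Hy2]] : exists y, conn g x y /\ (K <= nrm y)%N.
  apply: contrapT => Hn; apply: Hp.
  apply: (@sub_finite_set _ _ [set z : site | (nrm z <= K)%N]); last exact: boxset_finite.
  move=> y /= cy; apply: ltnW; rewrite ltnNge; apply/negP => Ky; apply: Hn; by exists y.
have : Gk K g x \/ (conn (restr K g) x y /\ (nrm y < K)%N).
  elim: (clos_rt_rtn1 _ _ _ _ Hy1) => [|a b [e [ge he]] _ IH].
    case: (ltnP (nrm x) K) => H; [by right; split => //; exact: rt_refl|].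
    by left; exists x; split => //; exact: conn_refl.
  have [//|[ca na]] := IH; first by left.
  have cb : conn (restr K g) x b.
    apply: (conn_trans ca); apply: conn_step; exists e; split => //.
    rewrite /restr ge /=; case: he => -[E1 E2]; first by rewrite E1 ltnW.
    by rewrite E1; apply: leq_trans (nrm_shift2 b e.2) _; rewrite -E1 -E2.
  case: (ltnP (nrm b) K) => Hb'; [by right|by left; exists b].
by case => // -[_]; rewrite ltnNge Hy2.
Qed.

Lemma Gk_perc (g : edge -> bool) (x : site) : (forall K, Gk K g x) -> perc g x.
Proof.
move=> H Hf; have [K HK] := finite_bound Hf.
have [y [Ky cy]] := H K.
have : (nrm y < K)%N by apply: HK; apply: conn_mono cy => e /andP[].
by rewrite ltnNge Ky.
Qed.

Lemma perc_Gall (g : edge -> bool) (x : site) : perc g x <-> forall K, Gall K g x.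
Proof.
split; first by move=> Hp K k _; exact: perc_Gk.
by move=> H; apply: Gk_perc => K; exact: H.
Qed.

Lemma Gall_anti K K' (g : edge -> bool) x : (K <= K')%N -> Gall K' g x -> Gall K g x.
Proof. by move=> KK H k kK; apply: H; exact: leq_trans kK KK. Qed.

Lemma Gall_ext K (h h' : edge -> bool) x : (forall e : edge, (nrm e.1 <= K)%N -> h e = h' e) ->
  Gall K h x -> Gall K h' x.
Proof.
move=> He H k kK; rewrite /Gk; have -> : restr k h' = restr k h.
  apply: funext => e; rewrite /restr; case: (leqP (nrm e.1) k) => ek.
    by rewrite He // (leq_trans ek kK).
  by rewrite !andbF.
exact: H.
Qed.

Lemma fin_uniq_seq (U : eqType) (A : set U) : finite_set A ->
  exists s : seq U, uniq s /\ forall x, x \in s <-> A x.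
Proof.
move=> /finite_seqP [s ->]; exists (undup s); split; first exact: undup_uniq.
by move=> x; rewrite mem_undup.
Qed.

Lemma eset_finite K : finite_set [set e : edge | (nrm e.1 <= K)%N].
Proof.
apply: (@sub_finite_set _ _ ([set z : site | (nrm z <= K)%N] `*` setT)).
  by move=> e /= H; split.
by apply: finite_setX; [exact: boxset_finite | exact: finite_finset].
Qed.

Definition rem (S : seq edge) (g : edge -> bool) : edge -> bool := fun e => g e && (e \notin S).

Lemma perc_mono (g g' : edge -> bool) x : (forall e, g e -> g' e) -> perc g x -> perc g' x.
Proof.
move=> H Hp Hf; apply: Hp; apply: sub_finite_set Hf => y /= cy; exact: conn_mono cy.
Qed.

Lemma removal (g : edge -> bool) x (S : seq edge) : perc g x ->
  exists v, (v = x \/ exists2 e, e \in S & (v = e.1 \/ v = Defs.shift e.1 e.2)) /\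
    perc (rem S g) v.
Proof.
move=> Hp.
pose V := [set v | v = x \/ exists2 e, e \in S & (v = e.1 \/ v = Defs.shift e.1 e.2)].
have claim y : conn g x y -> exists2 v, V v & conn (rem S g) v y.
  move=> cy; elim: (clos_rt_rtn1 _ _ _ _ cy) => [|a b [e [ge he]] _ [v Vv cv]].
    by exists x; [left|exact: conn_refl].
  case eS: (e \in S).
    exists b; last exact: conn_refl.
    by right; exists e => //; case: he => -[E1 E2]; [right|left].
  exists v => //; apply: (conn_trans cv); apply: conn_step; exists e; split => //.
  by rewrite /rem ge eS.
apply: contrapT => Hn; apply: Hp.
have Vfin : finite_set V.
  apply: (@sub_finite_set _ _ ([set x] `|` [set` map fst S] `|` [set` map (fun e => Defs.shift e.1 e.2) S])).
    move=> v [->|[e eS [->|->]]]; [by left; left|left; right|right] => /=;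
      by apply/mapP; exists e.
  rewrite !finite_setU; split; [split|]; [exact: finite_set1 | exact: finite_seq | exact: finite_seq].
apply: (@sub_finite_set _ _ (\bigcup_(v in V) [set y | conn (rem S g) v y])).
  by move=> y /= /claim [v Vv cv]; exists v.
apply: bigcup_finite => // v Vv; apply: contrapT => Hv; apply: Hn; exists v; split => //.
Qed.

Lemma unifK (s : seq site) (Q : nat -> site -> Prop) :
  (forall K K' y, (K <= K')%N -> Q K y -> Q K' y) ->
  (forall y, y \in s -> exists K, Q K y) -> exists K, forall y, y \in s -> Q K y.
Proof.
move=> Qm; elim: s => [|a s IH] H; first by exists 0%N.
have [K1 h1] := H a (mem_head _ _).
have [K2 h2] : exists K, forall y, y \in s -> Q K y.
  by apply: IH => y ys; apply: H; rewrite inE ys orbT.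
exists (maxn K1 K2) => y; rewrite inE => /orP[/eqP->|ys].
  by apply: Qm h1; exact: leq_maxl.
by apply: Qm (h2 _ ys); exact: leq_maxr.
Qed.

End Perc.
Section Geo.
Variables (R : realType) (d : nat).
Local Notation site := (site d).
Local Notation edge := (edge d).

Definition pt (z : site) : 'rV[R]_d := \row_j ((z j)%:~R + 2^-1).
Definition ev_i (i : 'I_d) : 'rV[R]_d := \row_j (if j == i then 1 else 0).
Definition segf (z : site) i (s : R) : 'rV[R]_d := pt z + s *: ev_i i.
Definition seg (z : site) i : set 'rV[R]_d := segf z i @` `[0, 1]%classic.

Lemma segf_cont z i : continuous (segf z i).
Proof.
move=> s; rewrite /segf; apply: cvgD; first exact: cvg_cst.
exact: scalel_continuous.
Qed.

Lemma seg_connected z i : connected (seg z i).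
Proof.
apply: connected_continuous_connected; first exact: segment_connected.
exact/continuous_subspaceT/segf_cont.
Qed.

Lemma half_gt0 : (0 : R) < 2^-1. Proof. by rewrite invr_gt0 ltr0n. Qed.
Lemma half_lt1 : (2^-1 : R) < 1. Proof. by rewrite invf_lt1 ?ltr0n // ltr1n. Qed.

Lemma half_in : 0 < (2^-1 : R) < 1. Proof. by rewrite half_gt0 half_lt1. Qed.

Lemma int_eq_of (a b : int) (r : R) : 0 < r < 1 -> a%:~R + r = b%:~R -> False.
Proof.
move=> /andP[r0 r1] E.
have h1 : a < b by rewrite -(ltr_int R) -E ltrDl.
have h2 : b < a + 1 by rewrite -(ltr_int R) -E intrD ltrD2l.
lia.
Qed.

Lemma int_le_of (a b : int) (r : R) : 0 < r < 1 -> b%:~R <= a%:~R + r <= b%:~R + 1 -> a = b.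
Proof.
move=> /andP[r0 r1] /andP[E1 E2].
have h1 : b < a + 1 by rewrite -(ltr_int R) intrD (le_lt_trans E1) // ltrD2l.
have h2 : a < b + 1 by rewrite -(ltr_int R) intrD (lt_le_trans _ E2) // ltrDl.
lia.
Qed.

Lemma seg_face (z : site) (i : 'I_d) (s : R) (Q : face d) : 0 <= s <= 1 ->
  @face_set R d Q (segf z i s) -> Q = (Defs.shift z i, i).
Proof.
case: Q => l k /andP[s0 s1] /= H.
have E j : segf z i s ord0 j = (z j)%:~R + 2^-1 + (if j == i then s else 0).
  by rewrite /segf !mxE; case: (j == i); rewrite ?mulr1 ?mulr0.
have ki : k = i.
  apply/eqP; apply: contraT => ki; have := H k; rewrite eqxx E (negbTE ki) addr0.
  by move/(int_eq_of half_in).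
subst k; congr (_, _); apply/ffunP => j; rewrite /Defs.shift ffunE.
have := H j; rewrite E; case: eqP => [->|ji].
  move=> /= Hl.
  suff : l i = z i + 1 by [].
  have h1 : z i < l i by rewrite -(ltr_int R) -Hl; have := half_gt0; lra.
  have h2 : l i < z i + 2 by rewrite -(ltr_int R) intrD -Hl; have := half_lt1; lra.
  lia.
move=> /= Hl; rewrite addr0 in Hl; rewrite (int_le_of half_in Hl); lia.
Qed.

Lemma segf0 (z : site) i : segf z i 0 = pt z.
Proof. by rewrite /segf scale0r addr0. Qed.

Lemma segf1 (z : site) i : segf z i 1 = pt (Defs.shift z i).
Proof.
apply/rowP => j; rewrite /segf /pt !mxE ffunE intrD mul1r.
by case: (j == i) => /=; rewrite ?addr0 //; lra.
Qed.

Definition eta (omega : face d -> bool) : edge -> bool :=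
  fun e => ~~ omega (Defs.shift e.1 e.2, e.2).

Lemma geo (omega : face d -> bool) n (z0 : site) :
  encloses (fun Q => omega Q) (@dual_box R d n) -> (nrm z0 < n)%N ->
  ~ perc (eta omega) z0.
Proof.
move=> [Qs [HQ [x /= [Ax [M HM] HV]]]] Hz0.
set A := ~` _ in Ax HM HV.
set C := connected_component A x in HM HV.
have inC y : conn (eta omega) z0 y -> C (pt y).
  move=> cy; elim: (clos_rt_rtn1 _ _ _ _ cy) => [|a b [e [ee he]] _ IH].
    apply: HV; split; first by exists z0 => j; rewrite mxE.
    move=> j; rewrite mxE; have := leq_ltn_trans (nrm_ge z0 j) Hz0 => Hj.
    have h1 : (z0 j)%:~R <= (n%:R - 1 : R).
      have -> : (n%:R - 1 : R) = (n%:Z - 1)%:~R by rewrite intrB -pmulrn.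
      by rewrite ler_int; move: (z0 j) Hj => k; lia.
    have h2 : (1 - n%:R : R) <= (z0 j)%:~R.
      have -> : (1 - n%:R : R) = (1 - n%:Z)%:~R by rewrite intrB -pmulrn.
      by rewrite ler_int; move: (z0 j) Hj => k; lia.
    have /andP[hh1 hh2] := half_in; rewrite ltr_norml; apply/andP; split; lra.
  have segA : seg e.1 e.2 `<=` A.
    move=> w [s s01 <-] [Q /= QQs Qy].
    move: s01; rewrite /= in_itv /= => s01.
    have EQ := seg_face s01 Qy; have H := HQ Q QQs; rewrite EQ in H.
    by rewrite /eta H in ee.
  have ends : seg e.1 e.2 (pt a) /\ seg e.1 e.2 (pt b).
    have h0 : seg e.1 e.2 (pt e.1) by exists 0; [rewrite /= in_itv /= lexx ler01 | exact: segf0].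
    have h1 : seg e.1 e.2 (pt (Defs.shift e.1 e.2)) by exists 1; [rewrite /= in_itv /= lexx ler01 | exact: segf1].
    by case: he => -[E1 E2]; rewrite E2 -E1; split.
  apply: (connected_component_trans IH).
  exact: (connected_component_max ends.1 segA (@seg_connected e.1 e.2) ends.2).
have [N HN] : exists N : nat, M + 1 <= N%:R.
  exists (Num.bound (`|M| + 1)); apply: ltW; apply: le_lt_trans (archi_boundP _).
    by rewrite lerD2r ler_norm.
  by rewrite addr_ge0.
move=> Hp; apply: Hp; apply: (sub_finite_set _ (boxset_finite d N)) => y /= cy.
apply: nrm_le => j; have := HM _ (inC y cy) j; rewrite mxE => Hy.
rewrite -(ler_nat R) natr_absz intr_norm.
have /andP[hh1 hh2] := half_in.
move: Hy; rewrite !ler_norml => /andP[H1 H2]; apply/andP; split; lra.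
Qed.
End Geo.
Definition fsh d (e : edge d) : face d := (Defs.shift e.1 e.2, e.2).
Definition unsh d (Q : face d) : edge d := ([ffun j => Q.1 j - (j == Q.2)%:Z], Q.2).
Lemma unsh_fsh d (e : edge d) : unsh (fsh e) = e.
Proof. by case: e => z i; rewrite /unsh /fsh /=; congr (_, _); apply/ffunP => j; rewrite !ffunE addrK. Qed.
Lemma fsh_inj d : injective (@fsh d).
Proof. exact: can_inj (@unsh_fsh d). Qed.

Lemma eta_iid (R : realType) d (dT : measure_display) (T : measurableType dT)
  (P : probability T R) (omega : face d -> T -> bool) p :
  iid_bernoulli P omega p -> iid_bernoulli P (fun e t => ~~ omega (fsh e) t) (1 - p).
Proof.
move=> [Hm Hp]; split.
  move=> e; rewrite (_ : [set t | ~~ omega (fsh e) t] = ~` [set t | omega (fsh e) t]).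
    exact/measurableC/Hm.
  by apply/seteqP; split => t /=; case: (omega _ t).
move=> s b us.
have := Hp (map (@fsh d) s) (fun Q => ~~ b (unsh Q)); rewrite (map_inj_uniq (@fsh_inj d)) us big_map.
have -> : \bigcap_(Q in [set` map (@fsh d) s]) [set t | omega Q t = ~~ b (unsh Q)] =
          \bigcap_(e in [set` s]) [set t | ~~ omega (fsh e) t = b e].
  apply/seteqP; split => t H.
  - move=> e es /=; have := H (fsh e); rewrite /= unsh_fsh => /(_ (map_f _ es)) ->.
    by rewrite negbK.
  - move=> Q /= /mapP [e es ->]; have := H e es; rewrite /= unsh_fsh => <-.
    by rewrite negbK.
move=> /(_ isT) ->; congr EFin; apply: eq_bigr => e _; rewrite unsh_fsh.
by case: (b e) => /=; ring.
Qed.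

Definition sR d (K : nat) : seq (edge d) := projT1 (cid (fin_uniq_seq (eset_finite d K))).
Lemma sRP d K : uniq (sR d K) /\ forall e, e \in sR d K <-> (nrm e.1 <= K)%N.
Proof. exact: (projT2 (cid (fin_uniq_seq (eset_finite d K)))). Qed.

Definition FG d K (x : site d) := fun g : edge d -> bool => Gall K g x.

Lemma FG_dep d K (x : site d) : depends (sR d K) (FG K x).
Proof.
move=> g c; split; apply: Gall_ext => e He; rewrite /upd;
  by have -> : e \in sR d K by apply/(sRP d K).2.
Qed.

Lemma Lperc (R : realType) d (dT : measure_display) (T : measurableType dT)
  (P : probability T R) (X : edge d -> T -> bool) q (x : site d) :
  iid_bernoulli P X q ->
  measurable (evt X (fun g => perc g x)) /\
  (fun K => (ev q (sR d K) (FG K x) (fun _ => false))%:E) @ \oo --> P (evt X (fun g => perc g x)).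
Proof.
move=> HX.
have L K := L1 HX (fun _ => false) (sRP d K).1 (FG_dep K x).
have E : evt X (fun g => perc g x) = \bigcap_K evt X (FG K x).
  apply/seteqP; split => t /=.
    by move=> H K _; exact: (perc_Gall _ _).1 H K.
  by move=> H; apply/(perc_Gall _ _).2 => K; exact: H.
rewrite E; split; first by apply: bigcapT_measurable => K; exact: (L K).1.
have -> : (fun K => (ev q (sR d K) (FG K x) (fun _ => false))%:E) = P \o (fun K => evt X (FG K x)).
  by apply: funext => K /=; rewrite (L K).2.
apply: nonincreasing_cvg_mu.
- exact: (le_lt_trans (probability_le1 _ (L 0%N).1) (ltey _)).
- by move=> K; exact: (L K).1.
- by apply: bigcapT_measurable => K; exact: (L K).1.
- move=> m n mn; apply/subsetPset => t /=; exact: Gall_anti.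
Qed.
Lemma not_theta_zero (R : realType) d (p : R) : 0 <= p -> p < 1 - @pc_bond R d ->
  ~ @bond_theta_zero R d (1 - p).
Proof.
move=> p0 ppc H.
set S := [set q : R | 0 <= q <= 1 /\ @bond_theta_zero R d q].
have ub : has_ubound S by exists 1 => q [/andP[_ ->]].
have pcE : @pc_bond R d = sup S by [].
have q0 : 0 < 1 - p.
  case: (pselect (S !=set0)) => [[s Ss]|S0].
    have := sup_upper_bound (conj (ex_intro _ s Ss) ub) Ss.
    move: Ss => [/andP[s0 _] _]; rewrite -pcE; lra.
  have S0' : S = set0 by apply/seteqP; split => // q Sq; apply: S0; exists q.
  have : @pc_bond R d = 0 by rewrite pcE S0' sup0.
  lra.
have Sq : S (1 - p) by split => //; apply/andP; split; lra.
have := sup_upper_bound (conj (ex_intro _ _ Sq) ub) Sq.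
rewrite -pcE; lra.
Qed.

Lemma theta_eq (R : realType) d (dT : measure_display) (T : measurableType dT)
  (P : probability T R) (X : edge d -> T -> bool)
  (dT' : measure_display) (T' : measurableType dT')
  (P' : probability T' R) (X' : edge d -> T' -> bool) q (x : site d) :
  iid_bernoulli P X q -> iid_bernoulli P' X' q ->
  P (evt X (fun g => perc g x)) = P' (evt X' (fun g => perc g x)).
Proof.
move=> H1 H2; have [_ c1] := Lperc x H1; have [_ c2] := Lperc x H2.
exact: (cvg_unique _ c1 c2).
Qed.
Section Main.
Variables (R : realType) (d : nat) (dT : measure_display) (T : measurableType dT)
  (P : probability T R) (omega : face d -> T -> bool) (p : R).
Hypothesis HX : iid_bernoulli P omega p.

Let X : edge d -> T -> bool := fun e t => ~~ omega (fsh e) t.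
Let HXe : iid_bernoulli P X (1 - p) := eta_iid HX.
Let perc0 := evt X (fun g => perc g (origin d)).
Let Gs K := evt X (FG K (origin d)).
Let S r := sR d r.
Definition FM r K := fun g : edge d -> bool =>
  forall x, (nrm x <= r.+1)%N -> ~ Gall K (rem (S r) g) x.
Let Ms r K := evt X (FM r K).
Let sM r K := [seq e <- sR d K | e \notin S r].

Lemma M_dep r K : depends (sM r K) (FM r K).
Proof.
have E g c e : (nrm e.1 <= K)%N -> rem (S r) (upd (sM r K) g c) e = rem (S r) g e.
  move=> He; rewrite /rem /upd; case eS: (e \in S r); first by rewrite !andbF.
  by rewrite mem_filter eS /=; have -> : e \in sR d K by apply/(sRP d K).2.
move=> g c; split => H x hx HG; apply: (H x hx).
  by apply: Gall_ext HG => e He; rewrite E.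
by apply: Gall_ext HG => e He; rewrite E.
Qed.

Lemma uniq_SM r K : uniq (S r ++ sM r K).
Proof.
rewrite cat_uniq (sRP d r).1 filter_uniq ?(sRP d K).1 // andbT /=.
apply/hasPn => e; rewrite mem_filter => /andP[].
by [].
Qed.

Lemma indepGM r K : P (Gs r `&` Ms r K) = (P (Gs r) * P (Ms r K))%E.
Proof. exact: (indep HXe (uniq_SM r K) (FG_dep r (origin d)) (M_dep r K)). Qed.

Lemma nrm_origin : nrm (origin d) = 0%N.
Proof. by apply/eqP; rewrite -leqn0; apply: nrm_le => j; rewrite ffunE. Qed.

Lemma M_perc_disj r K : Ms r K `&` perc0 = set0.
Proof.
apply/seteqP; split => // t [HM Hp].
have [v [Vv Hv]] := removal (S r) Hp.
apply: (HM v); last by apply/(perc_Gall _ _).1.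
case: Vv => [->|[e eS [->|->]]]; first by rewrite nrm_origin.
  by apply: leqW; apply/(sRP d r).2.
by apply: leq_trans (nrm_shift1 _ _) _; rewrite ltnS; apply/(sRP d r).2.
Qed.

Lemma M_incr r : nondecreasing_seq (Ms r).
Proof.
move=> m n mn; apply/subsetPset => t H x hx HG; apply: (H x hx).
exact: Gall_anti mn HG.
Qed.

Lemma M_meas r K : measurable (Ms r K).
Proof. exact: (L1 HXe (fun _ => false) (filter_uniq _ (sRP d K).1) (M_dep r K)).1. Qed.

Lemma G_meas r : measurable (Gs r).
Proof. exact: (L1 HXe (fun _ => false) (sRP d r).1 (FG_dep r (origin d))).1. Qed.

Definition En n := [set t | encloses (fun Q => omega Q t) (@dual_box R d n)].

Lemma E_sub n r : (r.+1 < n)%N -> En n `<=` \bigcup_K Ms r K.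
Proof.
move=> rn t Ht.
have [s [us sP]] := fin_uniq_seq (boxset_finite d r.+1).
have [K HK] : exists K, forall x, x \in s -> ~ Gall K (rem (S r) (X^~ t)) x.
  apply: unifK.
    by move=> K K' y KK' H1 H2; apply: H1; exact: Gall_anti KK' H2.
  move=> x /sP /= hx.
  have np : ~ perc (rem (S r) (X^~ t)) x.
    move=> Hp; have := geo Ht (leq_ltn_trans hx rn); apply.
    by apply: perc_mono Hp => e /andP[].
  apply: contrapT => Hn; apply: np; apply/perc_Gall => K.
  by apply: contrapT => HK; apply: Hn; exists K.
exists K => // x hx; apply: HK; exact/sP.
Qed.

Lemma En_meas n : measurable (En n).
Proof.
pose good (Qs : seq (face d)) := exists x : 'rV[R]_d,
      let A := ~` (\bigcup_(Q in [set` Qs]) @face_set R d Q) in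
      [/\ A x, bounded_Rd (connected_component A x)
        & @dual_box R d n `<=` connected_component A x].
have -> : En n = \bigcup_(Qs : seq (face d)) (if `[< good Qs >] then
    \bigcap_(Q in [set` Qs]) [set t | omega Q t] else set0).
  apply/seteqP; split => t.
    move=> [Qs [HQ Hg]]; exists Qs => //; case: asboolP => // _ Q QQs; exact: HQ.
  move=> [Qs _]; case: asboolP => // Hg H; exists Qs; split => // Q QQs; exact: H.
apply: countable_bigcupT_measurable; first exact: countableP.
move=> Qs.
case: asboolP => // _; apply: fin_bigcap_measurable => // Q _; exact: HX.1.
Qed.

Lemma finP (A : set T) : measurable A -> P A = (fine (P A))%:E.
Proof.
move=> mA; rewrite fineK // ge0_fin_numE ?measure_ge0 //.
exact: (le_lt_trans (probability_le1 _ mA) (ltey _)).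
Qed.

Lemma finP_ge0 (A : set T) : 0 <= fine (P A).
Proof. by apply: fine_ge0; exact: measure_ge0. Qed.

Lemma Ple (A B : set T) : measurable A -> measurable B -> A `<=` B -> (P A <= P B)%E.
Proof. by move=> mA mB AB; apply: (le_measure P) => //; rewrite inE. Qed.

Lemma perc_sub_G r : perc0 `<=` Gs r.
Proof. by move=> t Hp; exact: (perc_Gall _ _).1 Hp r. Qed.

Lemma main_cvg : 0 <= p -> p < 1 - @pc_bond R d ->
  (fun n => P (En n)) @ \oo --> 0%E.
Proof.
move=> p0 ppc.
have [mperc cperc] := Lperc (origin d) HXe.
set th := fine (P perc0).
have th_pos : 0 < th.
  have : P perc0 != 0%E.
    apply/eqP => H0; apply: (not_theta_zero p0 ppc) => dT' T' P' om' Hom'.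
    have := theta_eq (origin d) HXe Hom'; rewrite /perc0 in H0; rewrite H0.
    by move=> <-.
  rewrite (finP mperc) eqe => H; rewrite lt_neqAle eq_sym H finP_ge0.
  by [].
pose g r := fine (P (Gs r)).
have thg r : th <= g r.
  have HH := (Ple mperc (G_meas r) (@perc_sub_G r)).
  by rewrite -lee_fin -(finP mperc) -(finP (G_meas r)).
have key r n : (r.+1 < n)%N -> g r * fine (P (En n)) <= g r - th.
  move=> rn.
  pose a K := fine (P (Ms r K)).
  have gpos : 0 < g r by exact: lt_le_trans th_pos (thg r).
  have ha K : a K <= (g r - th) / g r.
    rewrite ler_pdivlMr // mulrC.
    have D : (Gs r `&` Ms r K) `&` perc0 = set0 by rewrite -setIA M_perc_disj setI0.
    have mGM : measurable (Gs r `&` Ms r K) by apply: measurableI; [exact: G_meas | exact: M_meas].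
    have U : P ((Gs r `&` Ms r K) `|` perc0) = (P (Gs r `&` Ms r K) + P perc0)%E := measureU P mGM mperc D.
    have le : (P ((Gs r `&` Ms r K) `|` perc0) <= P (Gs r))%E.
      apply: Ple; [exact: measurableU | exact: G_meas|].
      by move=> t [[]|/perc_sub_G].
    rewrite U indepGM (finP (G_meas r)) (finP (M_meas r K)) (finP mperc) -EFinM -EFinD lee_fin in le.
    have thE : fine (P (evt X (fun g => perc g (origin d)))) = th by [].
    rewrite /a /g; lra.
  have mU : measurable (\bigcup_K Ms r K) by apply: bigcapT_measurable || apply: bigcupT_measurable => K; exact: M_meas.
  have cU : (P \o Ms r) @ \oo --> P (\bigcup_K Ms r K).
    by apply: nondecreasing_cvg_mu => //; [exact: M_meas | exact: M_incr].
  rewrite (finP mU) in cU; have /fine_cvgP [_ cUr] := cU.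
  have LE : fine (P (\bigcup_K Ms r K)) <= (g r - th) / g r.
    rewrite -(cvg_lim _ cUr) //; apply: limr_le; first by apply/cvg_ex; exists (fine (P (\bigcup_K Ms r K))).
    by near=> K; exact: ha K.
  have uE : fine (P (En n)) <= fine (P (\bigcup_K Ms r K)).
    have HH := Ple (En_meas n) mU (@E_sub n r rn).
    by rewrite -lee_fin -(finP (En_meas n)) -(finP mU).
  have := le_trans uE LE; rewrite ler_pdivlMr //; lra.
apply: cvg_EFin.
  by near=> n; rewrite (finP (En_meas n)).
apply/cvgrPdist_le => eps eps0.
have cG : (P \o Gs) @ \oo --> (th%:E).
  rewrite /th -(finP mperc).
  have -> : P \o Gs = (fun K => (ev (1 - p) (sR d K) (FG K (origin d)) (fun _ => false))%:E).
    by apply: funext => K /=; rewrite (L1 HXe (fun _ => false) (sRP d K).1 (FG_dep K (origin d))).2.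
  exact: cperc.
have /fine_cvgP [_ cGr] := cG.
have := (cvgrPdist_le _ _).1 cGr (th * eps) (mulr_gt0 th_pos eps0).
move=> [N _ HN].
have HgN : g N <= th + th * eps.
  by have := HN N (leqnn N); rewrite /= ler_norml => /andP[H1 H2]; rewrite /g; lra.
exists N.+2 => // n /= Nn.
have k := key N n Nn.
rewrite sub0r normrN ger0_norm ?finP_ge0 //.
have := thg N; have := finP_ge0 (En n); move: k HgN; rewrite /g.
move: (fine (P (Gs N))) (fine (P (En n))) => gg uu; nra.
Unshelve. all: by end_near.
Qed.
End Main.


Unset Implicit Arguments.

Theorem lemma3p4 (R : realType) (d : nat) (p : R)
  (dT : measure_display) (T : measurableType dT) (P : probability T R)
  (omega : face d -> T -> bool) :
  (2 <= d)%N -> 0 <= p -> p < 1 - @pc_bond R d ->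
  iid_bernoulli P omega p ->
  (fun n : nat =>
     P [set t | encloses (fun Q => omega Q t) (@dual_box R d n)])
    @ \oo --> (0%E : \bar R).
Proof.
move=> _ p0 ppc HX.
exact: (main_cvg HX p0 ppc).
Qed.
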